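(* Let $X$ be a topologically complete space and let $\mathcal A$ be a family of closed, locally finite, normal covers of $X$ satisfying conditions (I) and (II) below. Let $Y$ be a closed subset of $X$, and for $\alpha\in\mathcal A$ put $\alpha|Y=\{F\cap Y : F\in\alpha\}$ and $\mathcal A|Y=\{\alpha|Y:\alpha\in\mathcal A\}$. Then the family $\mathcal A|Y$ of covers of $Y$ satisfies conditions (I) and (II) with $X$ replaced by $Y$ (and open sets of $Y$ taken in the subspace topology), namely: (I$_Y$) for each open subset $U$ of $Y$ and each $x\in U$ there is $\alpha\in\mathcal A$ with $\bigcup\mathrm{star}_{\alpha|Y}(x)\subset U$; (II$_Y$) if for each $\alpha\in\mathcal A$ a member $f(\alpha)\in\alpha$ is chosen such that the collection $\{f(\alpha)\cap Y\}_{\alpha\in\mathcal A}$ has the finite intersection property, then $\bigcap_{\alpha\in\mathcal A}(f(\alpha)\cap Y)\neq\emptyset$.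
   Context: A topologically complete space is a Tychonoff space that is complete with respect to its finest uniformity. A cover $\alpha$ of $X$ is a closed, locally finite, normal cover if its members are closed, it is locally finite, and there is a partition of unity $\{\phi_{\alpha,V}:V\in\alpha\}$ subordinated to it: continuous $\phi_{\alpha,V}:X\to[0,1]$ with $\mathrm{cl}(\phi_{\alpha,V}^{-1}((0,1]))\subset\mathrm{int}(V)$ and $\sum_{V\in\alpha}\phi_{\alpha,V}=1$. For a cover $\alpha$ of a space and a subset $S$, $\mathrm{star}_\alpha(S)=\{V\in\alpha: V\cap S\neq\emptyset\}$, $\mathrm{star}_\alpha(x)=\mathrm{star}_\alpha(\{x\})$, and $\bigcup$ of a collection denotes the union of its members. Conditions on $\mathcal A$: (I) for each open $U\subset X$ and each $x\in U$ there exists $\alpha\in\mathcal A$ with $\bigcup\mathrm{star}_\alpha(x)\subset U$; (II) whenever a member $f(\alpha)\in\alpha$ is selected for each $\alpha\in\mathcal A$ and the collection $\{f(\alpha)\}$ has the finite intersection property, then $\bigcap_{\alpha\in\mathcal A}f(\alpha)\neq\emptyset$. *)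

(* Defs.v *)
From HB Require Import structures.
From mathcomp Require Import all_boot all_order all_algebra.
From mathcomp Require Import all_classical all_reals all_analysis.
From mathcomp Require Import Rstruct Rstruct_topology.
Set Implicit Arguments. Unset Strict Implicit. Unset Printing Implicit Defensive.
Import Order.TTheory GRing.Theory Num.Theory.
Local Open Scope classical_set_scope.
Local Open Scope ring_scope.

Section Defs.
Variable T : topologicalType.

Definition is_uniformity (U : set (set (T * T))) : Prop :=
  U setT /\
  (forall E F, U E -> E `<=` F -> U F) /\
  (forall E F, U E -> U F -> U (E `&` F)) /\
  (forall E, U E -> [set xy | xy.1 = xy.2] `<=` E) /\
  (forall E, U E -> U [set xy | E (xy.2, xy.1)]) /\
  (forall E, U E -> exists2 D, U D &
     (forall x y z, D (x, y) -> D (y, z) -> E (x, z))).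

Definition compatible_uniformity (U : set (set (T * T))) : Prop :=
  is_uniformity U /\
  forall (x : T) (A : set T),
    nbhs x A <-> exists2 E, U E & [set y | E (x, y)] `<=` A.

Definition finest_uniformity (U : set (set (T * T))) : Prop :=
  compatible_uniformity U /\
  forall V, compatible_uniformity V -> V `<=` U.

Definition cauchy_wrt (U : set (set (T * T))) (F : set_system T) : Prop :=
  forall E, U E -> exists2 A, F A & forall x y, A x -> A y -> E (x, y).

Definition complete_wrt (U : set (set (T * T))) : Prop :=
  forall F : set_system T, ProperFilter F -> cauchy_wrt U F ->
    exists x : T, F --> x.

Definition completely_regular_space : Prop :=
  forall (C : set T) (x : T), closed C -> ~ C x ->
    exists f : T -> Rdefinitions.R, [/\ continuous f, (forall y, 0 <= f y <= 1),
                          f x = 0 & (forall y, C y -> f y = 1)].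

Definition tychonoff_space : Prop :=
  completely_regular_space /\ accessible_space T.

Definition topologically_complete : Prop :=
  tychonoff_space /\
  exists U, finest_uniformity U /\ complete_wrt U.

Definition is_cover (alpha : set (set T)) : Prop :=
  \bigcup_(V in alpha) V = setT.

Definition locally_finite_family (alpha : set (set T)) : Prop :=
  forall x : T, exists2 N, nbhs x N &
    finite_set [set V | alpha V /\ V `&` N !=set0].

Definition clf_normal_cover (alpha : set (set T)) : Prop :=
  [/\ is_cover alpha,
      (forall V, alpha V -> closed V),
      locally_finite_family alpha &
      exists phi : set T -> T -> Rdefinitions.R,
        [/\ (forall V, alpha V -> continuous (phi V)),
            (forall V x, alpha V -> 0 <= phi V x <= 1),
            (forall V, alpha V ->
               closure [set x | 0 < phi V x] `<=` interior V) &
            (forall x, finite_set [set V | alpha V /\ phi V x != 0] /\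
                       (\sum_(V \in alpha) phi V x = 1))]].

Definition star (alpha : set (set T)) (S : set T) : set (set T) :=
  [set V | alpha V /\ V `&` S !=set0].

Definition restrict_cover (alpha : set (set T)) (Y : set T) : set (set T) :=
  [set G | exists2 F, alpha F & G = F `&` Y].

Definition fip_family (I : Type) (A : set I) (g : I -> set T) : Prop :=
  forall B : set I, finite_set B -> B `<=` A -> B !=set0 ->
    exists x, forall a, B a -> g a x.

Definition condI (calA : set (set (set T))) : Prop :=
  forall (U : set T) (x : T), open U -> U x ->
    exists2 alpha, calA alpha & \bigcup_(V in star alpha [set x]) V `<=` U.

Definition condII (calA : set (set (set T))) : Prop :=
  forall f : set (set T) -> set T,
    (forall alpha, calA alpha -> alpha (f alpha)) ->
    fip_family calA f ->
    exists x, forall alpha, calA alpha -> f alpha x.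

Definition open_in (Y U : set T) : Prop :=
  exists2 O, open O & U = O `&` Y.

Definition condI_sub (calA : set (set (set T))) (Y : set T) : Prop :=
  forall (U : set T) (x : T), open_in Y U -> U x ->
    exists2 alpha, calA alpha &
      \bigcup_(V in star (restrict_cover alpha Y) [set x]) V `<=` U.

Definition condII_sub (calA : set (set (set T))) (Y : set T) : Prop :=
  forall f : set (set T) -> set T,
    (forall alpha, calA alpha -> alpha (f alpha)) ->
    fip_family calA (fun alpha => f alpha `&` Y) ->
    exists x, Y x /\ forall alpha, calA alpha -> (f alpha `&` Y) x.

End Defs.

(* Main.v *)
Require Import Defs.
From HB Require Import structures.
From mathcomp Require Import all_boot all_order all_algebra.
From mathcomp Require Import all_classical all_reals all_analysis.
From mathcomp Require Import Rstruct Rstruct_topology.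
Local Open Scope classical_set_scope.

Theorem proposition2p1 (T : topologicalType) (calA : set (set (set T)))
  (Y : set T) :
  topologically_complete T ->
  (forall alpha, calA alpha -> clf_normal_cover alpha) ->
  condI calA -> condII calA ->
  closed Y ->
  condI_sub calA Y /\ condII_sub calA Y.
Proof.
move=> _ _ hI hII cY; split.
{ move=> U x [W oW ->] [Ox Yx].
  have [alpha Aa Hs] := hI W x oW Ox.
  exists alpha => // z [V [[F aF ->] [w [[Fw Yw] wx]]] [Fz Yz]].
  split => //; apply: (Hs z); exists F => //; split => //.
  by exists w; split. }
{ move=> f hf hfip.
  have hfip' : fip_family calA f.
    move=> B fB BA B0; have [x Hx] := hfip B fB BA B0.
    by exists x => a /Hx [].
  have [x Hx] := hII f hf hfip'.
  have [Yx|nYx] := pselect (Y x).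
    by exists x; split => // a Aa; split => //; apply: Hx.
  exfalso.
  have [a0 Aa0 Hs] := hI (~` Y) x (closed_openC cY) nYx.
  have sub : [set a0] `<=` calA by move=> a ->.
  have ne : [set a0] !=set0 by exists a0.
  have [y Hy] := hfip [set a0] (finite_set1 a0) sub ne.
  have [fy Yy] := Hy a0 (erefl a0).
  have : (~` Y) y.
    apply: (Hs y); exists (f a0) => //; split; first exact: hf.
    by exists x; split => //; apply: Hx.
  by []. }
Qed.
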